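(* For an integer $b\ge2$ let $O_{12(b-2)+k}$, $k\in\{1,5,7\}$, denote respectively $Y(b;(2,1),(3,2),(4,3))$, $Y(b;(2,1),(3,1),(4,3))$, $Y(b;(2,1),(3,2),(4,1))$, and let $X$ be its canonical negative definite plumbed 4-manifold, with intersection form $Q_X$ on $H_2(X;\mathbb{Z})$. Then for every $n\ge1$, the orthogonal direct sum of $n$ copies of $Q_X$ does not embed (as a lattice, i.e. by a homomorphism preserving the pairing) into the standard negative definite lattice $(\mathbb{Z}^{N},\langle-1\rangle^{N})$ with $N=n\cdot\mathrm{rk}(Q_X)$.
   Context: $Y(b;(\alpha_1,\beta_1),\dots,(\alpha_r,\beta_r))$ with $\alpha_i>\beta_i>0$ coprime and $b-\sum\beta_i/\alpha_i>0$ is the boundary of its canonical negative definite plumbing: a central vertex of weight $-b$ and, for each $i$, a leg with weights $-a_i^1,\dots,-a_i^{s_i}$ where $\alpha_i/\beta_i=a_i^1-1/(a_i^2-\cdots-1/a_i^{s_i})$, $a_i^j\ge2$ (vertices are disk bundles over $S^2$ of the given Euler numbers, edges are plumbings). Concretely: for $k=1$ the legs are $(-2)$, $(-2,-2)$, $(-2,-2,-2)$; for $k=5$ they are $(-2)$, $(-3)$, $(-2,-2,-2)$; for $k=7$ they are $(-2)$, $(-2,-2)$, $(-4)$. $Q_X$ is the intersection form in the basis of spheres corresponding to vertices. $(\mathbb{Z}^N,\langle-1\rangle^N)$ is $\mathbb{Z}^N$ with $e_i\cdot e_j=-\delta_{ij}$. *)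

(* Defs.v *)
From HB Require Import structures.
From mathcomp Require Import all_boot all_order all_algebra.
Set Implicit Arguments. Unset Strict Implicit. Unset Printing Implicit Defensive.
Import Order.TTheory GRing.Theory Num.Theory.
Local Open Scope ring_scope.

(** Hirzebruch-Jung (negative) continued fraction expansion
    alpha/beta = a1 - 1/(a2 - ... - 1/as), a_j >= 2, for alpha > beta > 0.
    [fuel] bounds the recursion (fuel = alpha suffices). *)
Fixpoint hj_cf_aux (fuel alpha beta : nat) : seq nat :=
  match fuel with
  | 0 => [::]
  | fuel'.+1 =>
      if beta == 0%N then [::]
      else let a := ((alpha + beta - 1) %/ beta)%N in
           a :: hj_cf_aux fuel' beta (a * beta - alpha)%N
  end.
Definition hj_cf (alpha beta : nat) : seq nat := hj_cf_aux alpha alpha beta.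

Definition seifert_data (k : nat) : seq (nat * nat) :=
  if k == 1%N then [:: (2,1); (3,2); (4,3)]%N
  else if k == 5%N then [:: (2,1); (3,1); (4,3)]%N
  else [:: (2,1); (3,2); (4,1)]%N.

(** Legs of the canonical star-shaped plumbing: list of (-)weights per leg. *)
Definition legs_of (d : seq (nat * nat)) : seq (seq nat) :=
  [seq hj_cf p.1 p.2 | p <- d].

(** Non-central vertices, as (leg index, position in leg, a_i^j). *)
Definition leg_verts (legs : seq (seq nat)) : seq (nat * nat * nat) :=
  flatten [seq [seq (l, t, nth 0%N (nth [::] legs l) t)
               | t <- iota 0 (size (nth [::] legs l))]
          | l <- iota 0 (size legs)].

(** Vertex set of the plumbing graph: None = central vertex. *)
Definition pvert (legs : seq (seq nat)) : finType :=
  option 'I_(size (leg_verts legs)).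

Definition lv (legs : seq (seq nat)) (i : 'I_(size (leg_verts legs))) :=
  nth (0, 0, 0)%N (leg_verts legs) i.

Definition lv_leg legs (i : 'I_(size (leg_verts legs))) : nat := (lv i).1.1.
Definition lv_pos legs (i : 'I_(size (leg_verts legs))) : nat := (lv i).1.2.
Definition lv_wt legs (i : 'I_(size (leg_verts legs))) : nat := (lv i).2.

Definition plumb_form (b : nat) (legs : seq (seq nat))
    (x y : pvert legs) : int :=
  match x, y with
  | None, None => - (b%:Z)
  | None, Some j => if lv_pos j == 0%N then 1 else 0
  | Some i, None => if lv_pos i == 0%N then 1 else 0
  | Some i, Some j =>
      if i == j then - ((lv_wt i)%:Z)
      else if (lv_leg i == lv_leg j) &&
              (((lv_pos i).+1 == lv_pos j) || ((lv_pos j).+1 == lv_pos i))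
           then 1 else 0
  end.

Definition X_legs (k : nat) := legs_of (seifert_data k).
Definition QX (b k : nat) : pvert (X_legs k) -> pvert (X_legs k) -> int :=
  @plumb_form b (X_legs k).

Definition bform (V : finType) (M : V -> V -> int)
    (u v : {ffun V -> int}) : int :=
  \sum_(x : V) \sum_(y : V) u x * M x y * v y.

Definition osum (n : nat) (V : finType) (M : V -> V -> int)
    (p q : 'I_n * V) : int :=
  if p.1 == q.1 then M p.2 q.2 else 0.

Definition negstd (N : nat) (i j : 'I_N) : int := - ((i == j)%:R).

Definition lattice_embeds (V W : finType) (MV : V -> V -> int)
    (MW : W -> W -> int) : Prop :=
  exists f : {ffun V -> int} -> {ffun W -> int},
    (forall u v, f (u + v) = f u + f v) /\
    (forall u v, bform MW (f u) (f v) = bform MV u v).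

(* Main.v *)
Require Import Defs.
From HB Require Import structures.
From mathcomp Require Import all_boot all_order all_algebra ring lra zify.
Import Order.TTheory GRing.Theory Num.Theory.
Local Open Scope ring_scope.

Lemma big_opt (T : finType) (F : option T -> rat) :
  \sum_(v : option T) F v = F None + \sum_(t : T) F (Some t).
Proof.
rewrite (bigD1 None) //=; congr (_ + _).
rewrite (reindex_omap Some (fun v => v)) //=.
  by apply: eq_bigl => t; rewrite eqxx.
by case.
Qed.

Definition Gq (b k : nat) (v w : pvert (X_legs k)) : rat := - (@QX b k v w)%:~R.

Definition E1 {R : comNzRingType} (b z a b1 b2 c1 c2 c3 : R) : R :=
  (12 * b - 23) * (6 * a ^+ 2 + 8 * (b1 ^+ 2 + b1 * b2 + b2 ^+ 2)
      + 3 * (3 * c1 ^+ 2 + 4 * c2 ^+ 2 + 3 * c3 ^+ 2 + 4 * c1 * c2 + 2 * c1 * c3 + 4 * c2 * c3))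
  + (12 * z + 6 * a + 4 * (2 * b1 + b2) + 3 * (3 * c1 + 2 * c2 + c3)) ^+ 2.

Definition E5 {R : comNzRingType} (b z a c c1 c2 c3 : R) : R :=
  (12 * b - 19) * (6 * a ^+ 2 + 4 * c ^+ 2
      + 3 * (3 * c1 ^+ 2 + 4 * c2 ^+ 2 + 3 * c3 ^+ 2 + 4 * c1 * c2 + 2 * c1 * c3 + 4 * c2 * c3))
  + (12 * z + 6 * a + 4 * c + 3 * (3 * c1 + 2 * c2 + c3)) ^+ 2.

Definition E7 {R : comNzRingType} (b z a b1 b2 d : R) : R :=
  (12 * b - 17) * (6 * a ^+ 2 + 8 * (b1 ^+ 2 + b1 * b2 + b2 ^+ 2) + 3 * d ^+ 2)
  + (12 * z + 6 * a + 4 * (2 * b1 + b2) + 3 * d) ^+ 2.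

Ltac cdiv := repeat match goal with |- context [(?a %/ ?c)%N] =>
  let v := eval vm_compute in (a %/ c)%N in change (a %/ c)%N with v end.

Lemma all_v1 (P : pvert (X_legs 1) -> Prop) :
  P None -> P (Some ord0) -> P (Some (lift ord0 ord0)) -> P (Some (lift ord0 (lift ord0 ord0))) -> P (Some (lift ord0 (lift ord0 (lift ord0 ord0)))) -> P (Some (lift ord0 (lift ord0 (lift ord0 (lift ord0 ord0))))) -> P (Some (lift ord0 (lift ord0 (lift ord0 (lift ord0 (lift ord0 ord0)))))) -> forall v, P v.
Proof.
move=> H0 H1 H2 H3 H4 H5 H6 [[m Hm]|] //.
case: m Hm => [|[|[|[|[|[|m]]]]]] Hm.
- by rewrite (_ : Ordinal Hm = ord0) //; apply: val_inj.
- by rewrite (_ : Ordinal Hm = (lift ord0 ord0)) //; apply: val_inj.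
- by rewrite (_ : Ordinal Hm = (lift ord0 (lift ord0 ord0))) //; apply: val_inj.
- by rewrite (_ : Ordinal Hm = (lift ord0 (lift ord0 (lift ord0 ord0)))) //; apply: val_inj.
- by rewrite (_ : Ordinal Hm = (lift ord0 (lift ord0 (lift ord0 (lift ord0 ord0))))) //; apply: val_inj.
- by rewrite (_ : Ordinal Hm = (lift ord0 (lift ord0 (lift ord0 (lift ord0 (lift ord0 ord0)))))) //; apply: val_inj.
- by [].
Qed.

Lemma row1_z b (y : pvert (X_legs 1) -> rat) :
  \sum_w Gq b 1 None w * y w = (b%:R * y None) + (-1 * y (Some ord0)) + (-1 * y (Some (lift ord0 ord0))) + (-1 * y (Some (lift ord0 (lift ord0 (lift ord0 ord0))))).
Proof. rewrite big_opt !big_ord_recl big_ord0 /Gq /= /lv_wt /lv /=; cdiv; ring. Qed.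

Lemma row1_0 b (y : pvert (X_legs 1) -> rat) :
  \sum_w Gq b 1 (Some ord0) w * y w = (-1 * y None) + (2 * y (Some ord0)).
Proof. rewrite big_opt !big_ord_recl big_ord0 /Gq /= /lv_wt /lv /=; cdiv; ring. Qed.

Lemma row1_1 b (y : pvert (X_legs 1) -> rat) :
  \sum_w Gq b 1 (Some (lift ord0 ord0)) w * y w = (-1 * y None) + (2 * y (Some (lift ord0 ord0))) + (-1 * y (Some (lift ord0 (lift ord0 ord0)))).
Proof. rewrite big_opt !big_ord_recl big_ord0 /Gq /= /lv_wt /lv /=; cdiv; ring. Qed.

Lemma row1_2 b (y : pvert (X_legs 1) -> rat) :
  \sum_w Gq b 1 (Some (lift ord0 (lift ord0 ord0))) w * y w = (-1 * y (Some (lift ord0 ord0))) + (2 * y (Some (lift ord0 (lift ord0 ord0)))).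
Proof. rewrite big_opt !big_ord_recl big_ord0 /Gq /= /lv_wt /lv /=; cdiv; ring. Qed.

Lemma row1_3 b (y : pvert (X_legs 1) -> rat) :
  \sum_w Gq b 1 (Some (lift ord0 (lift ord0 (lift ord0 ord0)))) w * y w = (-1 * y None) + (2 * y (Some (lift ord0 (lift ord0 (lift ord0 ord0))))) + (-1 * y (Some (lift ord0 (lift ord0 (lift ord0 (lift ord0 ord0)))))).
Proof. rewrite big_opt !big_ord_recl big_ord0 /Gq /= /lv_wt /lv /=; cdiv; ring. Qed.

Lemma row1_4 b (y : pvert (X_legs 1) -> rat) :
  \sum_w Gq b 1 (Some (lift ord0 (lift ord0 (lift ord0 (lift ord0 ord0))))) w * y w = (-1 * y (Some (lift ord0 (lift ord0 (lift ord0 ord0))))) + (2 * y (Some (lift ord0 (lift ord0 (lift ord0 (lift ord0 ord0)))))) + (-1 * y (Some (lift ord0 (lift ord0 (lift ord0 (lift ord0 (lift ord0 ord0))))))).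
Proof. rewrite big_opt !big_ord_recl big_ord0 /Gq /= /lv_wt /lv /=; cdiv; ring. Qed.

Lemma row1_5 b (y : pvert (X_legs 1) -> rat) :
  \sum_w Gq b 1 (Some (lift ord0 (lift ord0 (lift ord0 (lift ord0 (lift ord0 ord0)))))) w * y w = (-1 * y (Some (lift ord0 (lift ord0 (lift ord0 (lift ord0 ord0)))))) + (2 * y (Some (lift ord0 (lift ord0 (lift ord0 (lift ord0 (lift ord0 ord0))))))).
Proof. rewrite big_opt !big_ord_recl big_ord0 /Gq /= /lv_wt /lv /=; cdiv; ring. Qed.

Lemma ident1 b (y : pvert (X_legs 1) -> rat) :
  12 * (\sum_v y v * \sum_w Gq b 1 v w * y w) * (12 * b%:R - 23) =
  E1 (b%:R) (\sum_w Gq b 1 None w * y w) (\sum_w Gq b 1 (Some ord0) w * y w) (\sum_w Gq b 1 (Some (lift ord0 ord0)) w * y w) (\sum_w Gq b 1 (Some (lift ord0 (lift ord0 ord0))) w * y w) (\sum_w Gq b 1 (Some (lift ord0 (lift ord0 (lift ord0 ord0)))) w * y w) (\sum_w Gq b 1 (Some (lift ord0 (lift ord0 (lift ord0 (lift ord0 ord0))))) w * y w) (\sum_w Gq b 1 (Some (lift ord0 (lift ord0 (lift ord0 (lift ord0 (lift ord0 ord0)))))) w * y w).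
Proof.
rewrite big_opt (big_ord_recl 5) !big_ord_recl big_ord0.
rewrite row1_z row1_0 row1_1 row1_2 row1_3 row1_4 row1_5.
rewrite /E1; ring.
Qed.

Lemma nondeg1 b (y : pvert (X_legs 1) -> rat) : (2 <= b)%N ->
  (forall v, \sum_w Gq b 1 v w * y w = 0) -> forall v, y v = 0.
Proof.
move=> hb H.
have hb' : (2 : rat) <= b%:R by rewrite (ler_nat _ 2 b).
have hc : (12 * b%:R - 23) * y None = 12 * (\sum_w Gq b 1 None w * y w) + 6 * (\sum_w Gq b 1 (Some ord0) w * y w) + 8 * (\sum_w Gq b 1 (Some (lift ord0 ord0)) w * y w) + 4 * (\sum_w Gq b 1 (Some (lift ord0 (lift ord0 ord0))) w * y w) + 9 * (\sum_w Gq b 1 (Some (lift ord0 (lift ord0 (lift ord0 ord0)))) w * y w) + 6 * (\sum_w Gq b 1 (Some (lift ord0 (lift ord0 (lift ord0 (lift ord0 ord0))))) w * y w) + 3 * (\sum_w Gq b 1 (Some (lift ord0 (lift ord0 (lift ord0 (lift ord0 (lift ord0 ord0)))))) w * y w).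
  by rewrite row1_z row1_0 row1_1 row1_2 row1_3 row1_4 row1_5; ring.
rewrite !H !mulr0 !addr0 in hc.
have hz' : y None = 0.
  move/eqP: hc; rewrite mulf_eq0 => /orP [/eqP h|/eqP //].
  by exfalso; move: h hb'; clear; move=> h hb'; lra.
have h0 := H (Some ord0); rewrite row1_0 in h0.
have h1 := H (Some (lift ord0 ord0)); rewrite row1_1 in h1.
have h2 := H (Some (lift ord0 (lift ord0 ord0))); rewrite row1_2 in h2.
have h3 := H (Some (lift ord0 (lift ord0 (lift ord0 ord0)))); rewrite row1_3 in h3.
have h4 := H (Some (lift ord0 (lift ord0 (lift ord0 (lift ord0 ord0))))); rewrite row1_4 in h4.
have h5 := H (Some (lift ord0 (lift ord0 (lift ord0 (lift ord0 (lift ord0 ord0)))))); rewrite row1_5 in h5.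
apply: all_v1; first exact: hz'.
  by move: hz' h0; clear; move=> *; lra.
  by move: hz' h1 h2; clear; move=> *; lra.
  by move: hz' h1 h2; clear; move=> *; lra.
  by move: hz' h3 h4 h5; clear; move=> *; lra.
  by move: hz' h3 h4 h5; clear; move=> *; lra.
  by move: hz' h3 h4 h5; clear; move=> *; lra.
Qed.

Lemma all_v5 (P : pvert (X_legs 5) -> Prop) :
  P None -> P (Some ord0) -> P (Some (lift ord0 ord0)) -> P (Some (lift ord0 (lift ord0 ord0))) -> P (Some (lift ord0 (lift ord0 (lift ord0 ord0)))) -> P (Some (lift ord0 (lift ord0 (lift ord0 (lift ord0 ord0))))) -> forall v, P v.
Proof.
move=> H0 H1 H2 H3 H4 H5 [[m Hm]|] //.
case: m Hm => [|[|[|[|[|m]]]]] Hm.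
- by rewrite (_ : Ordinal Hm = ord0) //; apply: val_inj.
- by rewrite (_ : Ordinal Hm = (lift ord0 ord0)) //; apply: val_inj.
- by rewrite (_ : Ordinal Hm = (lift ord0 (lift ord0 ord0))) //; apply: val_inj.
- by rewrite (_ : Ordinal Hm = (lift ord0 (lift ord0 (lift ord0 ord0)))) //; apply: val_inj.
- by rewrite (_ : Ordinal Hm = (lift ord0 (lift ord0 (lift ord0 (lift ord0 ord0))))) //; apply: val_inj.
- by [].
Qed.

Lemma row5_z b (y : pvert (X_legs 5) -> rat) :
  \sum_w Gq b 5 None w * y w = (b%:R * y None) + (-1 * y (Some ord0)) + (-1 * y (Some (lift ord0 ord0))) + (-1 * y (Some (lift ord0 (lift ord0 ord0)))).
Proof. rewrite big_opt !big_ord_recl big_ord0 /Gq /= /lv_wt /lv /=; cdiv; ring. Qed.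

Lemma row5_0 b (y : pvert (X_legs 5) -> rat) :
  \sum_w Gq b 5 (Some ord0) w * y w = (-1 * y None) + (2 * y (Some ord0)).
Proof. rewrite big_opt !big_ord_recl big_ord0 /Gq /= /lv_wt /lv /=; cdiv; ring. Qed.

Lemma row5_1 b (y : pvert (X_legs 5) -> rat) :
  \sum_w Gq b 5 (Some (lift ord0 ord0)) w * y w = (-1 * y None) + (3 * y (Some (lift ord0 ord0))).
Proof. rewrite big_opt !big_ord_recl big_ord0 /Gq /= /lv_wt /lv /=; cdiv; ring. Qed.

Lemma row5_2 b (y : pvert (X_legs 5) -> rat) :
  \sum_w Gq b 5 (Some (lift ord0 (lift ord0 ord0))) w * y w = (-1 * y None) + (2 * y (Some (lift ord0 (lift ord0 ord0)))) + (-1 * y (Some (lift ord0 (lift ord0 (lift ord0 ord0))))).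
Proof. rewrite big_opt !big_ord_recl big_ord0 /Gq /= /lv_wt /lv /=; cdiv; ring. Qed.

Lemma row5_3 b (y : pvert (X_legs 5) -> rat) :
  \sum_w Gq b 5 (Some (lift ord0 (lift ord0 (lift ord0 ord0)))) w * y w = (-1 * y (Some (lift ord0 (lift ord0 ord0)))) + (2 * y (Some (lift ord0 (lift ord0 (lift ord0 ord0))))) + (-1 * y (Some (lift ord0 (lift ord0 (lift ord0 (lift ord0 ord0)))))).
Proof. rewrite big_opt !big_ord_recl big_ord0 /Gq /= /lv_wt /lv /=; cdiv; ring. Qed.

Lemma row5_4 b (y : pvert (X_legs 5) -> rat) :
  \sum_w Gq b 5 (Some (lift ord0 (lift ord0 (lift ord0 (lift ord0 ord0))))) w * y w = (-1 * y (Some (lift ord0 (lift ord0 (lift ord0 ord0))))) + (2 * y (Some (lift ord0 (lift ord0 (lift ord0 (lift ord0 ord0)))))).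
Proof. rewrite big_opt !big_ord_recl big_ord0 /Gq /= /lv_wt /lv /=; cdiv; ring. Qed.

Lemma ident5 b (y : pvert (X_legs 5) -> rat) :
  12 * (\sum_v y v * \sum_w Gq b 5 v w * y w) * (12 * b%:R - 19) =
  E5 (b%:R) (\sum_w Gq b 5 None w * y w) (\sum_w Gq b 5 (Some ord0) w * y w) (\sum_w Gq b 5 (Some (lift ord0 ord0)) w * y w) (\sum_w Gq b 5 (Some (lift ord0 (lift ord0 ord0))) w * y w) (\sum_w Gq b 5 (Some (lift ord0 (lift ord0 (lift ord0 ord0)))) w * y w) (\sum_w Gq b 5 (Some (lift ord0 (lift ord0 (lift ord0 (lift ord0 ord0))))) w * y w).
Proof.
rewrite big_opt (big_ord_recl 4) !big_ord_recl big_ord0.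
rewrite row5_z row5_0 row5_1 row5_2 row5_3 row5_4.
rewrite /E5; ring.
Qed.

Lemma nondeg5 b (y : pvert (X_legs 5) -> rat) : (2 <= b)%N ->
  (forall v, \sum_w Gq b 5 v w * y w = 0) -> forall v, y v = 0.
Proof.
move=> hb H.
have hb' : (2 : rat) <= b%:R by rewrite (ler_nat _ 2 b).
have hc : (12 * b%:R - 19) * y None = 12 * (\sum_w Gq b 5 None w * y w) + 6 * (\sum_w Gq b 5 (Some ord0) w * y w) + 4 * (\sum_w Gq b 5 (Some (lift ord0 ord0)) w * y w) + 9 * (\sum_w Gq b 5 (Some (lift ord0 (lift ord0 ord0))) w * y w) + 6 * (\sum_w Gq b 5 (Some (lift ord0 (lift ord0 (lift ord0 ord0)))) w * y w) + 3 * (\sum_w Gq b 5 (Some (lift ord0 (lift ord0 (lift ord0 (lift ord0 ord0))))) w * y w).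
  by rewrite row5_z row5_0 row5_1 row5_2 row5_3 row5_4; ring.
rewrite !H !mulr0 !addr0 in hc.
have hz' : y None = 0.
  move/eqP: hc; rewrite mulf_eq0 => /orP [/eqP h|/eqP //].
  by exfalso; move: h hb'; clear; move=> h hb'; lra.
have h0 := H (Some ord0); rewrite row5_0 in h0.
have h1 := H (Some (lift ord0 ord0)); rewrite row5_1 in h1.
have h2 := H (Some (lift ord0 (lift ord0 ord0))); rewrite row5_2 in h2.
have h3 := H (Some (lift ord0 (lift ord0 (lift ord0 ord0)))); rewrite row5_3 in h3.
have h4 := H (Some (lift ord0 (lift ord0 (lift ord0 (lift ord0 ord0))))); rewrite row5_4 in h4.
apply: all_v5; first exact: hz'.
  by move: hz' h0; clear; move=> *; lra.
  by move: hz' h1; clear; move=> *; lra.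
  by move: hz' h2 h3 h4; clear; move=> *; lra.
  by move: hz' h2 h3 h4; clear; move=> *; lra.
  by move: hz' h2 h3 h4; clear; move=> *; lra.
Qed.

Lemma all_v7 (P : pvert (X_legs 7) -> Prop) :
  P None -> P (Some ord0) -> P (Some (lift ord0 ord0)) -> P (Some (lift ord0 (lift ord0 ord0))) -> P (Some (lift ord0 (lift ord0 (lift ord0 ord0)))) -> forall v, P v.
Proof.
move=> H0 H1 H2 H3 H4 [[m Hm]|] //.
case: m Hm => [|[|[|[|m]]]] Hm.
- by rewrite (_ : Ordinal Hm = ord0) //; apply: val_inj.
- by rewrite (_ : Ordinal Hm = (lift ord0 ord0)) //; apply: val_inj.
- by rewrite (_ : Ordinal Hm = (lift ord0 (lift ord0 ord0))) //; apply: val_inj.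
- by rewrite (_ : Ordinal Hm = (lift ord0 (lift ord0 (lift ord0 ord0)))) //; apply: val_inj.
- by [].
Qed.

Lemma row7_z b (y : pvert (X_legs 7) -> rat) :
  \sum_w Gq b 7 None w * y w = (b%:R * y None) + (-1 * y (Some ord0)) + (-1 * y (Some (lift ord0 ord0))) + (-1 * y (Some (lift ord0 (lift ord0 (lift ord0 ord0))))).
Proof. rewrite big_opt !big_ord_recl big_ord0 /Gq /= /lv_wt /lv /=; cdiv; ring. Qed.

Lemma row7_0 b (y : pvert (X_legs 7) -> rat) :
  \sum_w Gq b 7 (Some ord0) w * y w = (-1 * y None) + (2 * y (Some ord0)).
Proof. rewrite big_opt !big_ord_recl big_ord0 /Gq /= /lv_wt /lv /=; cdiv; ring. Qed.

Lemma row7_1 b (y : pvert (X_legs 7) -> rat) :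
  \sum_w Gq b 7 (Some (lift ord0 ord0)) w * y w = (-1 * y None) + (2 * y (Some (lift ord0 ord0))) + (-1 * y (Some (lift ord0 (lift ord0 ord0)))).
Proof. rewrite big_opt !big_ord_recl big_ord0 /Gq /= /lv_wt /lv /=; cdiv; ring. Qed.

Lemma row7_2 b (y : pvert (X_legs 7) -> rat) :
  \sum_w Gq b 7 (Some (lift ord0 (lift ord0 ord0))) w * y w = (-1 * y (Some (lift ord0 ord0))) + (2 * y (Some (lift ord0 (lift ord0 ord0)))).
Proof. rewrite big_opt !big_ord_recl big_ord0 /Gq /= /lv_wt /lv /=; cdiv; ring. Qed.

Lemma row7_3 b (y : pvert (X_legs 7) -> rat) :
  \sum_w Gq b 7 (Some (lift ord0 (lift ord0 (lift ord0 ord0)))) w * y w = (-1 * y None) + (4 * y (Some (lift ord0 (lift ord0 (lift ord0 ord0))))).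
Proof. rewrite big_opt !big_ord_recl big_ord0 /Gq /= /lv_wt /lv /=; cdiv; ring. Qed.

Lemma ident7 b (y : pvert (X_legs 7) -> rat) :
  12 * (\sum_v y v * \sum_w Gq b 7 v w * y w) * (12 * b%:R - 17) =
  E7 (b%:R) (\sum_w Gq b 7 None w * y w) (\sum_w Gq b 7 (Some ord0) w * y w) (\sum_w Gq b 7 (Some (lift ord0 ord0)) w * y w) (\sum_w Gq b 7 (Some (lift ord0 (lift ord0 ord0))) w * y w) (\sum_w Gq b 7 (Some (lift ord0 (lift ord0 (lift ord0 ord0)))) w * y w).
Proof.
rewrite big_opt (big_ord_recl 3) !big_ord_recl big_ord0.
rewrite row7_z row7_0 row7_1 row7_2 row7_3.
rewrite /E7; ring.
Qed.

Lemma nondeg7 b (y : pvert (X_legs 7) -> rat) : (2 <= b)%N ->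
  (forall v, \sum_w Gq b 7 v w * y w = 0) -> forall v, y v = 0.
Proof.
move=> hb H.
have hb' : (2 : rat) <= b%:R by rewrite (ler_nat _ 2 b).
have hc : (12 * b%:R - 17) * y None = 12 * (\sum_w Gq b 7 None w * y w) + 6 * (\sum_w Gq b 7 (Some ord0) w * y w) + 8 * (\sum_w Gq b 7 (Some (lift ord0 ord0)) w * y w) + 4 * (\sum_w Gq b 7 (Some (lift ord0 (lift ord0 ord0))) w * y w) + 3 * (\sum_w Gq b 7 (Some (lift ord0 (lift ord0 (lift ord0 ord0)))) w * y w).
  by rewrite row7_z row7_0 row7_1 row7_2 row7_3; ring.
rewrite !H !mulr0 !addr0 in hc.
have hz' : y None = 0.
  move/eqP: hc; rewrite mulf_eq0 => /orP [/eqP h|/eqP //].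
  by exfalso; move: h hb'; clear; move=> h hb'; lra.
have h0 := H (Some ord0); rewrite row7_0 in h0.
have h1 := H (Some (lift ord0 ord0)); rewrite row7_1 in h1.
have h2 := H (Some (lift ord0 (lift ord0 ord0))); rewrite row7_2 in h2.
have h3 := H (Some (lift ord0 (lift ord0 (lift ord0 ord0)))); rewrite row7_3 in h3.
apply: all_v7; first exact: hz'.
  by move: hz' h0; clear; move=> *; lra.
  by move: hz' h1 h2; clear; move=> *; lra.
  by move: hz' h1 h2; clear; move=> *; lra.
  by move: hz' h3; clear; move=> *; lra.
Qed.



Lemma sq_small (c : int) : c ^+ 2 <= 3 -> c = -1 \/ c = 0 \/ c = 1.
Proof. move=> h. nia. Qed.
Lemma sq_pos (c : int) : c != 0 -> 1 <= c ^+ 2.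
Proof. move=> h; nia. Qed.
Lemma sq_01 (c : int) : c = 0 \/ 1 <= c ^+ 2.
Proof. by case: (eqVneq c 0) => [->|/sq_pos]; [left|right]. Qed.

Definition Q2 (x y : int) := x ^+ 2 + x * y + y ^+ 2.
Lemma Q2_01 x y : (x = 0 /\ y = 0) \/ 1 <= Q2 x y.
Proof.
have e : 4 * Q2 x y = (2 * x + y) ^+ 2 + 3 * y ^+ 2 by rewrite /Q2; ring.
case: (sq_01 y) => [hy|hy]; last by right; nia.
case: (sq_01 x) => [hx|hx]; first by left.
right; rewrite /Q2 hy; nia.
Qed.
Lemma Q2_ge x y : 0 <= Q2 x y.
Proof. case: (Q2_01 x y) => [[-> ->]|]; [by rewrite /Q2 | lia]. Qed.

Definition F3 (c1 c2 c3 : int) := 3 * c1 ^+ 2 + 4 * c2 ^+ 2 + 3 * c3 ^+ 2 + 4 * c1 * c2 + 2 * c1 * c3 + 4 * c2 * c3.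
Lemma F3_sos c1 c2 c3 : F3 c1 c2 c3 = (c1+c2+c3)^+2 + (c1+c2)^+2 + (c2+c3)^+2 + c1^+2 + c2^+2 + c3^+2.
Proof. rewrite /F3; ring. Qed.
Lemma F3_03 c1 c2 c3 : (c1 = 0 /\ c2 = 0 /\ c3 = 0) \/ 3 <= F3 c1 c2 c3.
Proof.
have s1 := sqr_ge0 (c1+c2+c3); have s2 := sqr_ge0 (c1+c2); have s3 := sqr_ge0 (c2+c3).
have s4 := sqr_ge0 c1; have s5 := sqr_ge0 c2; have s6 := sqr_ge0 c3.
case: (lerP 3 (F3 c1 c2 c3)) => h; first by right.
left; move: h; rewrite F3_sos => h.
have [h1|[h1|h1]] : c1 = -1 \/ c1 = 0 \/ c1 = 1 by apply: sq_small; lia.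
all: have [h2|[h2|h2]] : c2 = -1 \/ c2 = 0 \/ c2 = 1 by apply: sq_small; lia.
all: have [h3|[h3|h3]] : c3 = -1 \/ c3 = 0 \/ c3 = 1 by apply: sq_small; lia.
all: subst; move: h; rewrite /=; lia.
Qed.
Lemma F3_ge c1 c2 c3 : 0 <= F3 c1 c2 c3.
Proof. case: (F3_03 c1 c2 c3) => [[-> [-> ->]]|]; [by rewrite /F3 | lia]. Qed.

Lemma E1_eq (b z a b1 b2 c1 c2 c3 : int) : E1 b z a b1 b2 c1 c2 c3 =
  (12 * b - 23) * (6 * a ^+ 2 + 8 * Q2 b1 b2 + 3 * F3 c1 c2 c3)
  + (12 * z + 6 * a + 4 * (2 * b1 + b2) + 3 * (3 * c1 + 2 * c2 + c3)) ^+ 2.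
Proof. rewrite /E1 /Q2 /F3; ring. Qed.

Section K1.
Variables (b z a b1 b2 c1 c2 c3 : int).
Hypothesis hb : 2 <= b.
Let M := 12 * b - 23.
Let P := 6 * a ^+ 2 + 8 * Q2 b1 b2 + 3 * F3 c1 c2 c3.
Let E := E1 b z a b1 b2 c1 c2 c3.
Let T := 6 * a + 4 * (2 * b1 + b2) + 3 * (3 * c1 + 2 * c2 + c3).

Lemma k1_EP : E = M * P + (12 * z + T) ^+ 2. Proof. rewrite /E /M /P /T. by rewrite E1_eq !addrA. Qed.
Lemma k1_Pge : 0 <= P.
Proof. have := Q2_ge b1 b2; have := F3_ge c1 c2 c3; have := sqr_ge0 a; rewrite /P; lia. Qed.
Lemma k1_ge : 0 <= E.
Proof. rewrite k1_EP; have := k1_Pge; have := sqr_ge0 (12 * z + T); rewrite /M; nia. Qed.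
Lemma k1_MP : M * P <= E.
Proof. rewrite k1_EP; have := sqr_ge0 (12 * z + T); lia. Qed.

Lemma k1_shape0 : P < 6 -> [/\ a = 0, b1 = 0, b2 = 0, c1 = 0 & c2 = 0 /\ c3 = 0].
Proof.
rewrite /P => h.
have := Q2_ge b1 b2; have := F3_ge c1 c2 c3; have := sqr_ge0 a => ha hf hq.
case: (sq_01 a) => [Ha|Ha]; last by lia.
case: (Q2_01 b1 b2) => [[Hb1 Hb2]|]; last by lia.
case: (F3_03 c1 c2 c3) => [[H1 [H2 H3]]|]; last by lia.
by [].
Qed.

Lemma k1_shapeA : a != 0 -> P <= 12 -> [/\ a = 1 \/ a = -1, b1 = 0, b2 = 0, c1 = 0 & c2 = 0 /\ c3 = 0].
Proof.
rewrite /P => ha0 h.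
have := Q2_ge b1 b2; have := F3_ge c1 c2 c3; have := @sq_pos a ha0 => ha hf hq.
have [Ha|[Ha|Ha]] : a = -1 \/ a = 0 \/ a = 1 by apply: sq_small; lia.
2: by move: ha0; rewrite Ha.
all: case: (Q2_01 b1 b2) => [[Hb1 Hb2]|]; last by lia.
all: case: (F3_03 c1 c2 c3) => [[H1 [H2 H3]]|]; last by lia.
all: by split; auto.
Qed.

Lemma k1_big : a != 0 -> 6 * M < E.
Proof.
move=> ha0.
have hMP := k1_MP.
have hM : 1 <= M by rewrite /M; lia.
case: (lerP 7 P) => hP; first by nia.
have [Ha Hb1 Hb2 Hc1 [Hc2 Hc3]] := k1_shapeA ha0 (ltW (lt_le_trans hP (isT : (7:int) <= 12))).
rewrite k1_EP /P /T Hb1 Hb2 Hc1 Hc2 Hc3 /Q2 /F3.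
case: Ha => ->; nia.
Qed.

Lemma k1_small : E < 6 * M -> (4 %| E)%Z.
Proof.
move=> hE.
have hMP := k1_MP.
have hM : 1 <= M by rewrite /M; lia.
have hP : P < 6 by nia.
have [Ha Hb1 Hb2 Hc1 [Hc2 Hc3]] := k1_shape0 hP.
rewrite k1_EP /P /T Ha Hb1 Hb2 Hc1 Hc2 Hc3 /Q2 /F3; lia.
Qed.

Lemma k1_j0 : a != 0 -> E <= 12 * M -> (4 %| E - 2)%Z.
Proof.
move=> ha0 hE.
have hMP := k1_MP.
have hM : 1 <= M by rewrite /M; lia.
have hP : P <= 12 by nia.
have [Ha Hb1 Hb2 Hc1 [Hc2 Hc3]] := k1_shapeA ha0 hP.
rewrite k1_EP /M /P /T Hb1 Hb2 Hc1 Hc2 Hc3 /Q2 /F3.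
case: Ha => ->; lia.
Qed.
End K1.


Section K5.
Variables (b z a c c1 c2 c3 : int).
Hypothesis hb : 2 <= b.
Let M := 12 * b - 19.
Let P := 6 * a ^+ 2 + 4 * c ^+ 2 + 3 * F3 c1 c2 c3.
Let E := E5 b z a c c1 c2 c3.
Let T := 6 * a + 4 * c + 3 * (3 * c1 + 2 * c2 + c3).

Lemma k5_EP : E = M * P + (12 * z + T) ^+ 2.
Proof. rewrite /E /M /P /T /E5 /F3; ring. Qed.
Lemma k5_Pge : 0 <= P.
Proof. have := F3_ge c1 c2 c3; have := sqr_ge0 a; have := sqr_ge0 c; rewrite /P; lia. Qed.
Lemma k5_ge : 0 <= E.
Proof. rewrite k5_EP; have := k5_Pge; have := sqr_ge0 (12 * z + T); rewrite /M; nia. Qed.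
Lemma k5_MP : M * P <= E.
Proof. rewrite k5_EP; have := sqr_ge0 (12 * z + T); lia. Qed.

Lemma k5_shape0 : P < 6 -> [/\ a = 0, c1 = 0, c2 = 0, c3 = 0 & c = -1 \/ c = 0 \/ c = 1].
Proof.
rewrite /P => h.
have := F3_ge c1 c2 c3; have := sqr_ge0 a; have := sqr_ge0 c => hc ha hf.
case: (sq_01 a) => [Ha|Ha]; last by lia.
case: (F3_03 c1 c2 c3) => [[H1 [H2 H3]]|]; last by lia.
split => //; apply: sq_small; lia.
Qed.

Lemma k5_shapeA : a != 0 -> P <= 12 ->
  [/\ a = 1 \/ a = -1, c1 = 0, c2 = 0, c3 = 0 & c = -1 \/ c = 0 \/ c = 1].
Proof.
rewrite /P => ha0 h.
have := F3_ge c1 c2 c3; have := @sq_pos a ha0; have := sqr_ge0 c => hc ha hf.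
have [Ha|[Ha|Ha]] : a = -1 \/ a = 0 \/ a = 1 by apply: sq_small; lia.
2: by move: ha0; rewrite Ha.
all: case: (F3_03 c1 c2 c3) => [[H1 [H2 H3]]|]; last by lia.
all: split; auto; apply: sq_small; lia.
Qed.

Lemma k5_big : a != 0 -> 6 * M < E.
Proof.
move=> ha0.
have hMP := k5_MP.
have hM : 1 <= M by rewrite /M; lia.
case: (lerP 7 P) => hP; first by nia.
have [Ha Hc1 Hc2 Hc3 Hc] := k5_shapeA ha0 (ltW (lt_le_trans hP (isT : (7:int) <= 12))).
move: hP; rewrite k5_EP /P /T Hc1 Hc2 Hc3 /F3.
case: Ha => ->; case: Hc => [->|[->|->]]; nia.
Qed.

Lemma k5_small : E < 6 * M -> (4 %| E)%Z.
Proof.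
move=> hE.
have hMP := k5_MP.
have hM : 1 <= M by rewrite /M; lia.
have hP : P < 6 by nia.
have [Ha Hc1 Hc2 Hc3 Hc] := k5_shape0 hP.
rewrite k5_EP /P /T /M Ha Hc1 Hc2 Hc3 /F3.
case: Hc => [->|[->|->]]; lia.
Qed.

Lemma k5_j0 : a != 0 -> E <= 12 * M -> (4 %| E - 2)%Z.
Proof.
move=> ha0 hE.
have hMP := k5_MP.
have hM : 1 <= M by rewrite /M; lia.
have hP : P <= 12 by nia.
have [Ha Hc1 Hc2 Hc3 Hc] := k5_shapeA ha0 hP.
rewrite k5_EP /M /P /T Hc1 Hc2 Hc3 /F3.
case: Ha => ->; case: Hc => [->|[->|->]]; lia.
Qed.
End K5.

Section K7.
Variables (b z a b1 b2 d : int).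
Hypothesis hb : 2 <= b.
Let M := 12 * b - 17.
Let P := 6 * a ^+ 2 + 8 * Q2 b1 b2 + 3 * d ^+ 2.
Let E := E7 b z a b1 b2 d.
Let T := 6 * a + 4 * (2 * b1 + b2) + 3 * d.

Lemma k7_EP : E = M * P + (12 * z + T) ^+ 2.
Proof. rewrite /E /M /P /T /E7 /Q2; ring. Qed.
Lemma k7_Pge : 0 <= P.
Proof. have := Q2_ge b1 b2; have := sqr_ge0 a; have := sqr_ge0 d; rewrite /P; lia. Qed.
Lemma k7_ge : 0 <= E.
Proof. rewrite k7_EP; have := k7_Pge; have := sqr_ge0 (12 * z + T); rewrite /M; nia. Qed.
Lemma k7_MP : M * P <= E.
Proof. rewrite k7_EP; have := sqr_ge0 (12 * z + T); lia. Qed.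

Lemma k7_shape0 : P < 6 -> [/\ a = 0, b1 = 0, b2 = 0 & d = -1 \/ d = 0 \/ d = 1].
Proof.
rewrite /P => h.
have := Q2_ge b1 b2; have := sqr_ge0 a; have := sqr_ge0 d => hd ha hq.
case: (sq_01 a) => [Ha|Ha]; last by lia.
case: (Q2_01 b1 b2) => [[H1 H2]|]; last by lia.
split => //; apply: sq_small; lia.
Qed.

Lemma k7_shapeA : a != 0 -> P <= 12 ->
  [/\ a = 1 \/ a = -1, b1 = 0, b2 = 0 & d = -1 \/ d = 0 \/ d = 1].
Proof.
rewrite /P => ha0 h.
have := Q2_ge b1 b2; have := @sq_pos a ha0; have := sqr_ge0 d => hd ha hq.
have [Ha|[Ha|Ha]] : a = -1 \/ a = 0 \/ a = 1 by apply: sq_small; lia.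
2: by move: ha0; rewrite Ha.
all: case: (Q2_01 b1 b2) => [[H1 H2]|]; last by lia.
all: split; auto; apply: sq_small; lia.
Qed.

Lemma k7_big : a != 0 -> 6 * M < E.
Proof.
move=> ha0.
have hMP := k7_MP.
have hM : 1 <= M by rewrite /M; lia.
case: (lerP 7 P) => hP; first by nia.
have [Ha Hb1 Hb2 Hd] := k7_shapeA ha0 (ltW (lt_le_trans hP (isT : (7:int) <= 12))).
move: hP; rewrite k7_EP /P /T Hb1 Hb2 /Q2.
case: Ha => ->; case: Hd => [->|[->|->]]; nia.
Qed.

Lemma k7_small : E < 6 * M -> [/\ 0 <= d ^+ 2, 3 * M * d ^+ 2 <= E,
        (4 %| E - 2 * d ^+ 2)%Z & (9 %| E - 3 * M * d ^+ 2)%Z].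
Proof.
move=> hE.
have hMP := k7_MP.
have hM : 1 <= M by rewrite /M; lia.
have hP : P < 6 by nia.
have [Ha Hb1 Hb2 Hd] := k7_shape0 hP.
rewrite k7_EP /P /T /M Ha Hb1 Hb2 /Q2.
case: Hd => [->|[->|->]]; split; nia.
Qed.

Lemma k7_j0 : a != 0 -> E <= 12 * M -> [/\ 0 <= d ^+ 2, 6 * M + 3 * M * d ^+ 2 <= E,
        (4 %| E - 2 - 2 * d ^+ 2)%Z & (9 %| E - 6 * M - 3 * M * d ^+ 2)%Z].
Proof.
move=> ha0 hE.
have hMP := k7_MP.
have hM : 1 <= M by rewrite /M; lia.
have hP : P <= 12 by nia.
have [Ha Hb1 Hb2 Hd] := k7_shapeA ha0 hP.
rewrite k7_EP /M /P /T Hb1 Hb2 /Q2.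
case: Ha => ->; case: Hd => [->|[->|->]]; split; nia.
Qed.
End K7.


Lemma others_bound n (j0 : 'I_n) (E : 'I_n -> int) :
  (forall j, 0 <= E j) -> forall j, j != j0 -> E j <= \sum_(i | i != j0) E i.
Proof.
move=> hge j hj.
rewrite (bigD1 j) //= lerDl; exact: sumr_ge0.
Qed.

Lemma dvd_sum_others n (j0 : 'I_n) (E c : 'I_n -> int) (m : int) :
  (forall j, j != j0 -> (m %| E j - c j)%Z) ->
  (m %| \sum_(i | i != j0) E i - \sum_(i | i != j0) c i)%Z.
Proof.
move=> h; rewrite -sumrB; apply: rpred_sum => j hj; exact: h.
Qed.

Lemma final_mod4 n (j0 : 'I_n) (E : 'I_n -> int) (M : int) :
  (forall j, 0 <= E j) -> 6 * M < E j0 ->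
  (forall j, E j < 6 * M -> (4 %| E j)%Z) ->
  (E j0 <= 12 * M -> (4 %| E j0 - 2)%Z) ->
  \sum_j E j = 12 * M -> False.
Proof.
move=> hge hbig hsmall hj0 hsum.
rewrite (bigD1 j0) //= in hsum.
set S := \sum_(i | i != j0) E i in hsum.
have hS : 0 <= S by apply: sumr_ge0.
have hd : (4 %| S)%Z.
  apply: rpred_sum => j hj; apply: hsmall.
  have := @others_bound n j0 E hge j hj; rewrite -/S; lia.
have := hj0 ltac:(lia).
lia.
Qed.

Lemma final_mod36 n (j0 : 'I_n) (E e : 'I_n -> int) (M : int) :
  1 <= M -> ~ (3 %| M)%Z ->
  (forall j, 0 <= E j) -> 6 * M < E j0 ->
  (forall j, E j < 6 * M -> [/\ 0 <= e j, 3 * M * e j <= E j,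
        (4 %| E j - 2 * e j)%Z & (9 %| E j - 3 * M * e j)%Z]) ->
  (E j0 <= 12 * M -> [/\ 0 <= e j0, 6 * M + 3 * M * e j0 <= E j0,
        (4 %| E j0 - 2 - 2 * e j0)%Z & (9 %| E j0 - 6 * M - 3 * M * e j0)%Z]) ->
  \sum_j E j = 12 * M -> False.
Proof.
move=> hM h3 hge hbig hsmall hj0 hsum.
rewrite (bigD1 j0) //= in hsum.
set S := \sum_(i | i != j0) E i in hsum.
have hS : 0 <= S by apply: sumr_ge0.
have hsm : forall j, j != j0 -> E j < 6 * M.
  move=> j hj; have := @others_bound n j0 E hge j hj; rewrite -/S; lia.
set D := \sum_(i | i != j0) e i.
have hD : 0 <= D by apply: sumr_ge0 => j hj; have [] := hsmall j (hsm j hj).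
have h4 : (4 %| S - 2 * D)%Z.
  rewrite /D mulr_sumr; apply: dvd_sum_others => j hj.
  by have [] := hsmall j (hsm j hj).
have h9 : (9 %| S - 3 * M * D)%Z.
  rewrite /D mulr_sumr; apply: dvd_sum_others => j hj.
  by have [] := hsmall j (hsm j hj).
have hlo : 3 * M * D <= S.
  rewrite /D mulr_sumr /S; apply: ler_sum => j hj.
  by have [] := hsmall j (hsm j hj).
have [he0 hlo0 h40 h90] := hj0 ltac:(lia).
have hDD : e j0 + D <= 2.
  have h1 : M * (e j0 + D) <= M * 2.
    rewrite mulrDr; move: hlo0 hlo hsum; rewrite -!mulrA; lia.
  by rewrite ler_pM2l ?(lt_le_trans ltr01) in h1.
have [hx|[hx|hx]] : e j0 + D = 0 \/ e j0 + D = 1 \/ e j0 + D = 2 by lia.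
- lia.
- have hD' : D = 1 - e j0 by lia.
  rewrite hD' in h9 hlo.
  apply: h3.
  have e1 : (9 %| 3 * M)%Z.
    have := rpredD h9 h90.
    rewrite (_ : S - 3 * M * (1 - e j0) + (E j0 - 6 * M - 3 * M * e j0) = (E j0 + S) - 9 * M); last by ring.
    rewrite hsum (_ : 12 * M - 9 * M = 3 * M) //; ring.
  lia.
- lia.
Qed.


Lemma key_inverse (N : nat) (V : finType) (h : 'I_N -> V) (hbij : bijective h)
  (G : V -> V -> rat) (phi : V -> 'I_N -> rat)
  (gram : forall p q, \sum_k phi p k * phi q k = G p q)
  (posdef : forall w : V -> rat, (forall p, \sum_q G p q * w q = 0) -> forall p, w p = 0)
  (i : 'I_N) : exists y : V -> rat, forall k, \sum_q y q * phi q k = (i == k)%:R.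
Proof.
have [hinv hK hKi] := hbij.
have RI : forall F : V -> rat, \sum_q F q = \sum_r F (h r).
  by move=> F; rewrite (reindex h) //; exact: onW_bij.
pose Phi : 'M[rat]_N := \matrix_(r, k) phi (h r) k.
have Hu : Phi \in unitmx.
  rewrite unitmxE unitfE; apply/negP => /det0P [v vn0 vPhi].
  pose w q := v 0 (hinv q).
  have Hs : forall k, \sum_p w p * phi p k = 0.
    move=> k; have := congr1 (fun M : 'M[rat]_(1,N) => M 0 k) vPhi; rewrite !mxE => E; apply: etrans _ E.
    rewrite RI; apply: eq_bigr => r _; by rewrite /w hK mxE.
  have Hw0 : forall p, \sum_q G p q * w q = 0.
    move=> p.
    under eq_bigr => q _ do rewrite -gram mulr_suml.
    rewrite exchange_big /=; apply: big1 => k _.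
    transitivity (phi p k * \sum_q w q * phi q k); last by rewrite Hs mulr0.
    by rewrite mulr_sumr; apply: eq_bigr => q _; ring.
  apply/negP: vn0; rewrite negbK; apply/eqP/rowP => r; rewrite mxE.
  have := posdef w Hw0 (h r); rewrite /w hK. by [] || by rewrite (ord1 (0 : 'I_1)).
exists (fun q => invmx Phi i (hinv q)) => k.
rewrite RI.
have := congr1 (fun M : 'M[rat]_N => M i k) (mulVmx Hu); rewrite !mxE => <-.
by apply: eq_bigr => r _; rewrite hK mxE.
Qed.

Lemma bform_delta (V : finType) (M : V -> V -> int) (p q : V) :
  bform M [ffun x => (x == p)%:R] [ffun x => (x == q)%:R] = M p q.
Proof.
rewrite /bform.
have e1 : forall x, \sum_y [ffun x => (x == p)%:R] x * M x y * [ffun x => (x == q)%:R] y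
           = [ffun x => (x == p)%:R] x * M x q :> int.
  move=> x; rewrite (bigD1 q) //= [X in _ + X]big1 ?addr0; first by rewrite [X in _ * X]ffunE eqxx mulr1.
  by move=> y hy; rewrite [X in _ * X]ffunE (negbTE hy) mulr0.
under eq_bigr => x _ do rewrite e1.
rewrite (bigD1 p) //= [X in _ + X]big1 ?addr0; first by rewrite !ffunE eqxx mul1r.
by move=> x hx; rewrite ffunE /= (negbTE hx) mul0r.
Qed.

Lemma bform_neg (N : nat) (u v : {ffun 'I_N -> int}) :
  bform (@negstd N) u v = - \sum_i u i * v i.
Proof.
rewrite /bform -sumrN; apply: eq_bigr => i _.
rewrite (bigD1 i) //= big1 => [|j hj]; last by rewrite /negstd eq_sym (negbTE hj) oppr0 mulr0 mul0r.
by rewrite /negstd eqxx addr0 mulrN mulr1 mulNr.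
Qed.

Lemma main_generic (b k n : nat) (va : pvert (X_legs k)) (Ek : (pvert (X_legs k) -> int) -> int) (M : int)
  (hva : @QX b k va va = -2)
  (nondeg : forall y : pvert (X_legs k) -> rat, (forall v, \sum_w Gq b k v w * y w = 0) -> forall v, y v = 0)
  (ident : forall (y : pvert (X_legs k) -> rat) (x : pvert (X_legs k) -> int),
     (forall v, (x v)%:~R = \sum_w Gq b k v w * y w) ->
     12 * (\sum_v y v * (x v)%:~R) * M%:~R = (Ek x)%:~R)
  (fin : forall (X : 'I_n -> pvert (X_legs k) -> int) (j0 : 'I_n), X j0 va != 0 ->
     \sum_j Ek (X j) = 12 * M -> False)
  (j0 : 'I_n) :
  ~ lattice_embeds (@osum n _ (@QX b k)) (@negstd (n * #|pvert (X_legs k)|)).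
Proof.
set P := pvert (X_legs k).
set N := (n * #|P|)%N.
pose V : finType := ('I_n * P)%type.
move=> [f [_ fform]].
pose phi (p : V) := f [ffun x => (x == p)%:R].
have gram : forall p q, \sum_i phi p i * phi q i = - osum (@QX b k) p q.
  by move=> p q; have := fform [ffun x => (x == p)%:R] [ffun x => (x == q)%:R];
    rewrite bform_delta bform_neg => <-; rewrite opprK.
pose Gn (p q : V) : rat := - (osum (@QX b k) p q)%:~R.
have gramq : forall p q, \sum_i (phi p i)%:~R * (phi q i)%:~R = Gn p q.
  move=> p q; rewrite /Gn -rmorphN /= -gram rmorph_sum /=.
  by apply: eq_bigr => i _; rewrite rmorphM.
have eqN : #|V| = N by rewrite /V card_prod card_ord.
pose h (r : 'I_N) : V := enum_val (cast_ord (esym eqN) r).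
have hbij : bijective h.
  exists (fun p => cast_ord eqN (enum_rank p)) => r; rewrite /h.
    by rewrite enum_valK cast_ordKV.
  by rewrite cast_ordK enum_rankK.
have rowsplit : forall (w : V -> rat) (p : V),
    \sum_q Gn p q * w q = \sum_v Gq b k p.2 v * w (p.1, v).
  move=> w [j v] /=.
  rewrite (eq_bigr (fun q => Gn (j,v) (q.1,q.2) * w (q.1,q.2))); last by move=> [].
  rewrite -(pair_big xpredT xpredT (fun j' v' => Gn (j, v) (j', v') * w (j', v'))) /=.
  rewrite (bigD1 j) //= [X in _ + X]big1 ?addr0.
    by apply: eq_bigr => v' _; rewrite /Gn /osum /= eqxx.
  move=> j' hj'.
  by apply: big1 => v' _; rewrite /Gn /osum /= eq_sym (negbTE hj') oppr0 mul0r.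
have nondegN : forall w : V -> rat, (forall p, \sum_q Gn p q * w q = 0) -> forall p, w p = 0.
  move=> w hw [j v].
  apply: (nondeg (fun v' => w (j, v'))) => v'.
  by have := hw (j, v'); rewrite rowsplit.
have hnz : exists i, phi (j0, va) i != 0.
  apply/existsP; apply/negP => /existsP Hn.
  move: (gram (j0, va) (j0, va)); rewrite /osum /= eqxx hva opprK.
  rewrite big1 // => i _.
  have : ~~ (phi (j0, va) i != 0) by apply/negP => hi; apply: Hn; exists i.
  by rewrite negbK => /eqP ->; rewrite mul0r.
have [i hi] := hnz.
have [y hy] := @key_inverse N V h hbij Gn (fun p i => (phi p i)%:~R) gramq nondegN i.
pose x (p : V) := phi p i.
have hx : forall p, (x p)%:~R = \sum_q Gn p q * y q.
  move=> p; symmetry.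
  transitivity (\sum_kk (phi p kk)%:~R * \sum_q y q * (phi q kk)%:~R).
    under eq_bigr => q _ do rewrite -gramq mulr_suml.
    rewrite exchange_big /=; apply: eq_bigr => kk _; rewrite mulr_sumr; apply: eq_bigr => q _; ring.
  under eq_bigr => kk _ do rewrite hy.
  rewrite (bigD1 i) //= eqxx mulr1 [X in _ + X]big1 ?addr0 // => k' hk'.
  by rewrite eq_sym (negbTE hk') mulr0.
have hone : \sum_p y p * (x p)%:~R = 1.
  by have := hy i; rewrite eqxx.
pose X (j : 'I_n) (v : P) := x (j, v).
have hX : forall j v, (X j v)%:~R = \sum_w Gq b k v w * y (j, w).
  by move=> j v; rewrite /X hx rowsplit.
have hsum : (\sum_j Ek (X j))%:~R = (12 * M)%:~R :> rat.
  rewrite rmorph_sum /=.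
  under eq_bigr => j _ do rewrite -(ident (fun w => y (j, w)) (X j) (hX j)).
  rewrite -mulr_suml -mulr_sumr.
  rewrite (pair_big xpredT xpredT (fun j v => y (j, v) * (X j v)%:~R)) /=.
  rewrite (_ : \sum_p _ = \sum_p y p * (x p)%:~R); last by apply: eq_bigr => -[].
  by rewrite hone mulr1 rmorphM.
apply: (fin X j0) => //.
exact: (intr_inj hsum).
Qed.


Lemma E1_cast (b : nat) (z a b1 b2 c1 c2 c3 : int) :
  (E1 (b%:Z) z a b1 b2 c1 c2 c3)%:~R = E1 (b%:R : rat) z%:~R a%:~R b1%:~R b2%:~R c1%:~R c2%:~R c3%:~R.
Proof. rewrite /E1 !(rmorphD, rmorphB, rmorphM, rmorphXn) /=. ring. Qed.
Lemma E5_cast (b : nat) (z a c c1 c2 c3 : int) :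
  (E5 (b%:Z) z a c c1 c2 c3)%:~R = E5 (b%:R : rat) z%:~R a%:~R c%:~R c1%:~R c2%:~R c3%:~R.
Proof. rewrite /E5 !(rmorphD, rmorphB, rmorphM, rmorphXn) /=. ring. Qed.
Lemma E7_cast (b : nat) (z a b1 b2 d : int) :
  (E7 (b%:Z) z a b1 b2 d)%:~R = E7 (b%:R : rat) z%:~R a%:~R b1%:~R b2%:~R d%:~R.
Proof. rewrite /E7 !(rmorphD, rmorphB, rmorphM, rmorphXn) /=. ring. Qed.
Lemma M_cast (b : nat) (c : int) : ((12 * b%:Z - c)%:~R : rat) = 12 * b%:R - c%:~R.
Proof. rewrite !(rmorphD, rmorphB, rmorphM) /=. ring. Qed.

Lemma not_emb1 (b n : nat) : (2 <= b)%N -> (0 < n)%N ->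
  ~ lattice_embeds (@osum n _ (@QX b 1)) (@negstd (n * #|pvert (X_legs 1)|)).
Proof.
move=> hb hn.
have hbz : (2 : int) <= b%:Z by rewrite lez_nat.
apply: (@main_generic b 1 n (Some ord0)
  (fun x => E1 (b%:Z) (x None) (x (Some ord0)) (x (Some (lift ord0 ord0))) (x (Some (lift ord0 (lift ord0 ord0)))) (x (Some (lift ord0 (lift ord0 (lift ord0 ord0))))) (x (Some (lift ord0 (lift ord0 (lift ord0 (lift ord0 ord0)))))) (x (Some (lift ord0 (lift ord0 (lift ord0 (lift ord0 (lift ord0 ord0)))))))) (12 * b%:Z - 23) _ _ _ _ (Ordinal hn)).
- by vm_compute.
- by move=> y; apply: nondeg1.
- move=> y x hx.
  rewrite E1_cast M_cast.
  rewrite (eq_bigr (fun v => y v * \sum_w Gq b 1 v w * y w)); last by move=> v _; rewrite hx.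
  rewrite !hx.
  exact: ident1.
- move=> X j0 ha hs.
  apply: (@final_mod4 n j0 (fun j => E1 (b%:Z) (X j None) (X j (Some ord0)) (X j (Some (lift ord0 ord0))) (X j (Some (lift ord0 (lift ord0 ord0)))) (X j (Some (lift ord0 (lift ord0 (lift ord0 ord0))))) (X j (Some (lift ord0 (lift ord0 (lift ord0 (lift ord0 ord0)))))) (X j (Some (lift ord0 (lift ord0 (lift ord0 (lift ord0 (lift ord0 ord0)))))))) (12 * b%:Z - 23)) => //.
  + by move=> j; apply: k1_ge.
  + exact: k1_big.
  + by move=> j; apply: k1_small.
  + exact: k1_j0.
Qed.

Lemma not_emb5 (b n : nat) : (2 <= b)%N -> (0 < n)%N ->
  ~ lattice_embeds (@osum n _ (@QX b 5)) (@negstd (n * #|pvert (X_legs 5)|)).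
Proof.
move=> hb hn.
have hbz : (2 : int) <= b%:Z by rewrite lez_nat.
apply: (@main_generic b 5 n (Some ord0)
  (fun x => E5 (b%:Z) (x None) (x (Some ord0)) (x (Some (lift ord0 ord0))) (x (Some (lift ord0 (lift ord0 ord0)))) (x (Some (lift ord0 (lift ord0 (lift ord0 ord0))))) (x (Some (lift ord0 (lift ord0 (lift ord0 (lift ord0 ord0))))))) (12 * b%:Z - 19) _ _ _ _ (Ordinal hn)).
- by vm_compute.
- by move=> y; apply: nondeg5.
- move=> y x hx.
  rewrite E5_cast M_cast.
  rewrite (eq_bigr (fun v => y v * \sum_w Gq b 5 v w * y w)); last by move=> v _; rewrite hx.
  rewrite !hx.
  exact: ident5.
- move=> X j0 ha hs.
  apply: (@final_mod4 n j0 (fun j => E5 (b%:Z) (X j None) (X j (Some ord0)) (X j (Some (lift ord0 ord0))) (X j (Some (lift ord0 (lift ord0 ord0)))) (X j (Some (lift ord0 (lift ord0 (lift ord0 ord0))))) (X j (Some (lift ord0 (lift ord0 (lift ord0 (lift ord0 ord0))))))) (12 * b%:Z - 19)) => //.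
  + by move=> j; apply: k5_ge.
  + exact: k5_big.
  + by move=> j; apply: k5_small.
  + exact: k5_j0.
Qed.

Lemma not_emb7 (b n : nat) : (2 <= b)%N -> (0 < n)%N ->
  ~ lattice_embeds (@osum n _ (@QX b 7)) (@negstd (n * #|pvert (X_legs 7)|)).
Proof.
move=> hb hn.
have hbz : (2 : int) <= b%:Z by rewrite lez_nat.
apply: (@main_generic b 7 n (Some ord0)
  (fun x => E7 (b%:Z) (x None) (x (Some ord0)) (x (Some (lift ord0 ord0))) (x (Some (lift ord0 (lift ord0 ord0)))) (x (Some (lift ord0 (lift ord0 (lift ord0 ord0)))))) (12 * b%:Z - 17) _ _ _ _ (Ordinal hn)).
- by vm_compute.
- by move=> y; apply: nondeg7.
- move=> y x hx.
  rewrite E7_cast M_cast.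
  rewrite (eq_bigr (fun v => y v * \sum_w Gq b 7 v w * y w)); last by move=> v _; rewrite hx.
  rewrite !hx.
  exact: ident7.
- move=> X j0 ha hs.
  apply: (@final_mod36 n j0 (fun j => E7 (b%:Z) (X j None) (X j (Some ord0)) (X j (Some (lift ord0 ord0))) (X j (Some (lift ord0 (lift ord0 ord0)))) (X j (Some (lift ord0 (lift ord0 (lift ord0 ord0)))))) (fun j => (X j (Some (lift ord0 (lift ord0 (lift ord0 ord0))))) ^+ 2) (12 * b%:Z - 17)) => //.
  + lia.
  + lia.
  + by move=> j; apply: k7_ge.
  + exact: k7_big.
  + by move=> j; apply: k7_small.
  + exact: k7_j0.
Qed.

Theorem mainTheorem11 (b k n : nat) :
  (2 <= b)%N -> k \in [:: 1%N; 5%N; 7%N] -> (1 <= n)%N ->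
  ~ lattice_embeds (@osum n _ (@QX b k))
                   (@negstd (n * #|pvert (X_legs k)|)).
Proof.
move=> hb hk hn.
move: hk; rewrite !inE => /or3P [] /eqP ->.
- exact: not_emb1.
- exact: not_emb5.
- exact: not_emb7.
Qed.
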